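(* Let $M$ be a partial $H$-module with partial action $h\otimes m\mapsto h\cdot m$, and let $N$ be a left $H$-module with action $h\otimes n\mapsto hn$. Then $M\otimes N$ is a partial $H$-module via $$h\cdot(m\otimes n)=h_{(1)}\cdot m\otimes h_{(2)}n.$$
   Context: Throughout, $k$ is a field and $H$ is a Hopf algebra over $k$ with bijective antipode $S$ and Sweedler notation $\Delta(h)=h_{(1)}\otimes h_{(2)}$. A partial $H$-module is a vector space $M$ with a linear map $\pi:H\to\mathrm{End}_k(M)$, written $h\cdot m=\pi(h)(m)$, satisfying, for all $h,k\in H$: - $\pi(1_H)=\mathrm{id}$; - $\pi(h)\pi(k_{(1)})\pi(S(k_{(2)}))=\pi(hk_{(1)})\pi(S(k_{(2)}))$; - $\pi(h_{(1)})\pi(S(h_{(2)}))\pi(k)=\pi(h_{(1)})\pi(S(h_{(2)})k)$; - $\pi(h)\pi(S(k_{(1)}))\pi(k_{(2)})=\pi(hS(k_{(1)}))\pi(k_{(2)})$; - $\pi(S(h_{(1)}))\pi(h_{(2)})\pi(k)=\pi(S(h_{(1)}))\pi(h_{(2)}k)$. *)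

(* Defs.v *)
(* Tensor products are given by their universal
   property; Sweedler sums are the values of the induced linear maps. *)
From HB Require Import structures.
From mathcomp Require Import all_boot all_algebra.
From Stdlib Require Import ClassicalEpsilon.

Set Implicit Arguments.
Unset Strict Implicit.
Unset Printing Implicit Defensive.
Import GRing.Theory.
Local Open Scope ring_scope.

Definition is_linear (k : fieldType) (U W : lmodType k) (f : U -> W) : Prop :=
  forall (a : k) (x y : U), f (a *: x + y) = a *: f x + f y.

Definition is_bilinear (k : fieldType) (U V W : lmodType k) (f : U -> V -> W) : Prop :=
  (forall v : V, is_linear (fun u => f u v)) /\ (forall u : U, is_linear (f u)).

Record tensor (k : fieldType) (U V : lmodType k) := Tensor {
  tspace : lmodType k;
  tens : U -> V -> tspace;
  tens_bilinear : is_bilinear tens;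
  tens_universal : forall (W : lmodType k) (f : U -> V -> W), is_bilinear f ->
    exists g : tspace -> W, [/\ is_linear g,
      (forall u v, g (tens u v) = f u v) &
      (forall g' : tspace -> W, is_linear g' ->
         (forall u v, g' (tens u v) = f u v) -> forall x, g' x = g x)]
}.

(* tlift T f x : the value at x of the (unique) linear map T -> W that sends
   u (x) v to f u v (for f bilinear).  For x = Delta(h) this is the Sweedler sum
   f(h_(1), h_(2)). *)
Definition tlift (k : fieldType) (U V : lmodType k) (T : tensor U V)
  (W : lmodType k) (f : U -> V -> W) (x : tspace T) : W :=
  epsilon (inhabits 0) (fun w => exists g : tspace T -> W,
    [/\ is_linear g, (forall u v, g (tens T u v) = f u v) & g x = w]).

Arguments tlift {k U V} T {W} f x.

(* HHH is a tensor product (H (x) H) (x) H, used to state coassociativity. *)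
Definition is_hopf (k : fieldType) (H : algType k) (HH : tensor H H)
  (HHH : tensor (tspace HH) H) (Delta : H -> tspace HH) (eps : H -> k)
  (S : H -> H) : Prop :=
  
  (is_linear Delta) /\
  ((forall (a : k) (x y : H), eps (a *: x + y) = a * eps x + eps y)) /\
  (is_linear S) /\
  (
      Delta 1 = tens HH 1 1 /\
      (forall x y : H, Delta (x * y) =
         tlift HH (fun a b => tlift HH (fun c d => tens HH (a * c) (b * d)) (Delta y))
               (Delta x))) /\
  (eps 1 = 1 /\ (forall x y : H, eps (x * y) = eps x * eps y)) /\
  ((* coassociativity: h_(1)(1) (x) h_(1)(2) (x) h_(2) = h_(1) (x) h_(2)(1) (x) h_(2)(2) *)
      (forall h : H,
         tlift HH (fun a b => tens HHH (Delta a) b) (Delta h) =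
         tlift HH (fun a b => tlift HH (fun c d => tens HHH (tens HH a c) d) (Delta b))
               (Delta h))) /\
  (
      (forall h : H, tlift HH (fun a b => eps a *: b) (Delta h) = h /\
                     tlift HH (fun a b => eps b *: a) (Delta h) = h)) /\
  (
      (forall h : H, tlift HH (fun a b => S a * b) (Delta h) = eps h *: 1 /\
                     tlift HH (fun a b => a * S b) (Delta h) = eps h *: 1)) /\
  (bijective S).

(* Partial H-module: pi : H -> End_k(M) linear, with the five axioms
   (equalities of endomorphisms checked pointwise on m). *)
Definition is_partial_module (k : fieldType) (H : algType k) (HH : tensor H H)
  (Delta : H -> tspace HH) (S : H -> H) (M : lmodType k) (pi : H -> M -> M) : Prop :=
  
  (is_bilinear (fun (h : H) (m : M) => pi h m)) /\
  ((forall m : M, pi 1 m = m)) /\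
  ((forall (h g : H) (m : M),
         tlift HH (fun a b => pi h (pi a (pi (S b) m))) (Delta g) =
         tlift HH (fun a b => pi (h * a) (pi (S b) m)) (Delta g))) /\
  ((forall (h g : H) (m : M),
         tlift HH (fun a b => pi a (pi (S b) (pi g m))) (Delta h) =
         tlift HH (fun a b => pi a (pi (S b * g) m)) (Delta h))) /\
  ((forall (h g : H) (m : M),
         tlift HH (fun a b => pi h (pi (S a) (pi b m))) (Delta g) =
         tlift HH (fun a b => pi (h * S a) (pi b m)) (Delta g))) /\
  ((forall (h g : H) (m : M),
         tlift HH (fun a b => pi (S a) (pi b (pi g m))) (Delta h) =
         tlift HH (fun a b => pi (S a) (pi (b * g) m)) (Delta h))).

Definition is_module (k : fieldType) (H : algType k) (N : lmodType k)
  (rho : H -> N -> N) : Prop :=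
  [/\ is_bilinear (fun (h : H) (n : N) => rho h n),
      (forall n : N, rho 1 n = n) &
      (forall (x y : H) (n : N), rho (x * y) n = rho x (rho y n))].

(* Main.v *)
Require Import Defs.
From HB Require Import structures.
From mathcomp Require Import all_boot all_algebra.
From Stdlib Require Import ClassicalEpsilon FunctionalExtensionality.
Import GRing.Theory.
Local Open Scope ring_scope.
Set Implicit Arguments.
Unset Strict Implicit.
Unset Printing Implicit Defensive.

Section Gen.
Variable k : fieldType.
Implicit Types U V W X : lmodType k.

Lemma lin_id U : is_linear (fun x : U => x).
Proof. by []. Qed.

Lemma lin_comp U V W (f : V -> W) (g : U -> V) :
  is_linear f -> is_linear g -> is_linear (fun x => f (g x)).
Proof. by move=> hf hg a x y; rewrite hg hf. Qed.

Lemma lin_comb U W (f g : U -> W) (c : k) :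
  is_linear f -> is_linear g -> is_linear (fun x => c *: f x + g x).
Proof.
move=> hf hg a x y; rewrite hf hg !scalerDr !scalerA mulrC.
by rewrite addrACA.
Qed.

Lemma lin0 U W (f : U -> W) : is_linear f -> f 0 = 0.
Proof.
move=> hf; have := hf 1 0 0; rewrite !scale1r addr0 => e.
have : f 0 + f 0 - f 0 = f 0 - f 0 by rewrite -e.
by rewrite addrK subrr.
Qed.

Lemma lin_bil1 U V W (f : U -> V -> W) v : is_bilinear f -> is_linear (fun u => f u v).
Proof. by case=> h _; apply: h. Qed.
Lemma lin_bil2 U V W (f : U -> V -> W) u : is_bilinear f -> is_linear (f u).
Proof. by case=> _ h; apply: h. Qed.

Section Tensor.
Variables (U V : lmodType k) (T : tensor U V).

Lemma tlift_spec W (f : U -> V -> W) : is_bilinear f ->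
  [/\ is_linear (tlift T f), (forall u v, tlift T f (tens T u v) = f u v) &
   (forall g, is_linear g -> (forall u v, g (tens T u v) = f u v) ->
     forall x, tlift T f x = g x)].
Proof.
move=> bf; have [g [lg gt gu]] := tens_universal T bf.
have E : forall x, tlift T f x = g x.
  move=> x; rewrite /tlift.
  have ex : exists w, exists g0 : tspace T -> W,
     [/\ is_linear g0, (forall u v, g0 (tens T u v) = f u v) & g0 x = w].
    by exists (g x), g.
  have [g0 [lg0 g0t <-]] := epsilon_spec (inhabits 0) _ ex.
  exact: gu.
split.
- by move=> a x y; rewrite !E lg.
- by move=> u v; rewrite E gt.
- by move=> g' lg' g't x; rewrite E (gu g').
Qed.

Lemma tliftE W (f : U -> V -> W) u v : is_bilinear f -> tlift T f (tens T u v) = f u v.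
Proof. by move=> bf; case: (tlift_spec bf). Qed.

Lemma lin_tlift W (f : U -> V -> W) : is_bilinear f -> is_linear (tlift T f).
Proof. by move=> bf; case: (tlift_spec bf). Qed.

Lemma tlift_uniq W (f : U -> V -> W) g : is_bilinear f -> is_linear g ->
  (forall u v, g (tens T u v) = f u v) -> forall x, tlift T f x = g x.
Proof. by move=> bf; case: (tlift_spec bf) => _ _ h; apply: h. Qed.

Lemma tlift_ext W (f g : U -> V -> W) x : (forall u v, f u v = g u v) ->
  tlift T f x = tlift T g x.
Proof.
move=> e; have -> // : f = g.
by apply: functional_extensionality => u; apply: functional_extensionality => v.
Qed.

Lemma lin_tens1 X (G : X -> U) v : is_linear G -> is_linear (fun x => tens T (G x) v).
Proof. by move=> hG; apply: (lin_comp (f := fun u => tens T u v)) => //; apply: lin_bil1 (tens_bilinear T). Qed.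
Lemma lin_tens2 X (G : X -> V) u : is_linear G -> is_linear (fun x => tens T u (G x)).
Proof. by move=> hG; apply: (lin_comp (f := tens T u)) => //; apply: lin_bil2 (tens_bilinear T). Qed.

Lemma lin_tlift_arg W X (f : U -> V -> W) (G : X -> tspace T) :
  is_bilinear f -> is_linear G -> is_linear (fun x => tlift T f (G x)).
Proof. by move=> bf hG; apply: lin_comp => //; apply: lin_tlift. Qed.

Lemma tens_ext W (g1 g2 : tspace T -> W) : is_linear g1 -> is_linear g2 ->
  (forall u v, g1 (tens T u v) = g2 (tens T u v)) -> forall x, g1 x = g2 x.
Proof.
move=> l1 l2 e x.
have bf : is_bilinear (fun u v => g1 (tens T u v)).
  by split=> [v|u]; [apply: (lin_comp (f := g1)) => //; apply: lin_tens1 | apply: (lin_comp (f:=g1)) => //; apply: lin_tens2].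
rewrite -(tlift_uniq bf l1) // (tlift_uniq bf l2) //.
Qed.

Lemma lin_tlift_fun W X (F : X -> U -> V -> W) p :
  (forall x, is_bilinear (F x)) -> (forall u v, is_linear (fun x => F x u v)) ->
  is_linear (fun x => tlift T (F x) p).
Proof.
move=> bF lF a x y.
have lg : is_linear (fun p => a *: tlift T (F x) p + tlift T (F y) p).
  by apply: lin_comb; apply: lin_tlift.
rewrite (tlift_uniq (bF (a *: x + y)) lg) // => u v.
by rewrite !tliftE // lF.
Qed.

Lemma tlift_nat W W' (phi : W -> W') (f : U -> V -> W) p :
  is_linear phi -> is_bilinear f ->
  phi (tlift T f p) = tlift T (fun u v => phi (f u v)) p.
Proof.
move=> lphi bf.
have bg : is_bilinear (fun u v => phi (f u v)).
  by split=> [v|u]; apply: (lin_comp (f := phi)) => //; [apply: lin_bil1 bf | apply: lin_bil2 bf].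
symmetry; apply: (tlift_uniq (g := fun p => phi (tlift T f p)) bg).
  by apply: (lin_comp (f := phi)) => //; apply: lin_tlift.
by move=> u v; rewrite tliftE.
Qed.

End Tensor.
End Gen.

Ltac lin_extra := fail.

Ltac lin_lin :=
  match goal with
  | |- is_linear (fun x => x) => apply lin_id
  | |- is_linear (fun x => tlift ?T ?f (@?G x)) => apply (lin_tlift_arg (T:=T) (f:=f) (G:=G))
  | |- is_linear (fun x => tlift ?T (@?F x) ?p) => apply (lin_tlift_fun (T:=T) (F:=F) p)
  | |- is_linear (fun x => tens ?T (@?G x) ?v) => apply (lin_tens1 T (G:=G) v)
  | |- is_linear (fun x => tens ?T ?u (@?G x)) => apply (lin_tens2 T (G:=G) u)
  | |- is_linear (tlift _ _) => apply lin_tlift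
  | |- _ => solve [eauto]
  | |- _ => lin_extra
  end.

Ltac lin :=
  repeat match goal with
  | |- _ => assumption
  | |- _ => progress cbv beta
  | |- is_bilinear _ => split
  | |- is_linear _ => lin_lin
  | |- forall _, _ => intro
  end.

Section Fubini.
Variables (k : fieldType) (U1 V1 U2 V2 W : lmodType k) (T1 : tensor U1 V1) (T2 : tensor U2 V2).

Lemma fubini (F : U1 -> V1 -> U2 -> V2 -> W) x y :
  (forall b c d, is_linear (fun a => F a b c d)) ->
  (forall a c d, is_linear (fun b => F a b c d)) ->
  (forall a b d, is_linear (fun c => F a b c d)) ->
  (forall a b c, is_linear (fun d => F a b c d)) ->
  tlift T1 (fun a b => tlift T2 (F a b) y) x =
  tlift T2 (fun c d => tlift T1 (fun a b => F a b c d) x) y.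
Proof.
move=> l1 l2 l3 l4.
apply: (tens_ext (g1 := fun y => tlift T1 (fun a b => tlift T2 (F a b) y) x)
                 (g2 := fun y => tlift T2 (fun c d => tlift T1 (fun a b => F a b c d) x) y)).
- lin.
- lin.
- move=> c d /=; rewrite (tliftE T2); last by lin.
  apply: tlift_ext => a b; rewrite tliftE //; lin.
Qed.
End Fubini.

Section Hopf.
Variables (k : fieldType) (H : algType k) (HH : tensor H H)
  (HHH : tensor (tspace HH) H) (Delta : H -> tspace HH) (eps : H -> k) (S : H -> H).
Hypothesis hopf : is_hopf HHH Delta eps S.

Lemma linDelta : is_linear Delta. Proof. by case: hopf. Qed.
Lemma linS : is_linear S. Proof. by case: hopf => _ [_ [? _]]. Qed.
Lemma epsL a x y : eps (a *: x + y) = a * eps x + eps y. Proof. by case: hopf => _ [? _]. Qed.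
Lemma Delta1 : Delta 1 = tens HH 1 1. Proof. by case: hopf => _ [_ [_ [[? _] _]]]. Qed.
Lemma DeltaM x y : Delta (x * y) =
  tlift HH (fun a b => tlift HH (fun c d => tens HH (a * c) (b * d)) (Delta y)) (Delta x).
Proof. by case: hopf => _ [_ [_ [[_ ?] _]]]. Qed.
Lemma coass h : tlift HH (fun a b => tens HHH (Delta a) b) (Delta h) =
         tlift HH (fun a b => tlift HH (fun c d => tens HHH (tens HH a c) d) (Delta b))
               (Delta h).
Proof. by case: hopf => _ [_ [_ [_ [_ [? _]]]]]. Qed.
Lemma counitL h : tlift HH (fun a b => eps a *: b) (Delta h) = h.
Proof. by case: hopf => _ [_ [_ [_ [_ [_ [c _]]]]]]; case: (c h). Qed.
Lemma counitR h : tlift HH (fun a b => eps b *: a) (Delta h) = h.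
Proof. by case: hopf => _ [_ [_ [_ [_ [_ [c _]]]]]]; case: (c h). Qed.
Lemma antiL h : tlift HH (fun a b => S a * b) (Delta h) = eps h *: 1.
Proof. by case: hopf => _ [_ [_ [_ [_ [_ [_ [c _]]]]]]]; case: (c h). Qed.
Lemma antiR h : tlift HH (fun a b => a * S b) (Delta h) = eps h *: 1.
Proof. by case: hopf => _ [_ [_ [_ [_ [_ [_ [c _]]]]]]]; case: (c h). Qed.

Lemma linZ (U W : lmodType k) (f : U -> W) a x : is_linear f -> f (a *: x) = a *: f x.
Proof. by move=> hf; have := hf a x 0; rewrite addr0 (lin0 hf) addr0. Qed.
Lemma linDD (U W : lmodType k) (f : U -> W) x y : is_linear f -> f (x + y) = f x + f y.
Proof. by move=> hf; have := hf 1 x y; rewrite !scale1r. Qed.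

Lemma lin_Delta (X : lmodType k) (G : X -> H) : is_linear G -> is_linear (fun x => Delta (G x)).
Proof. by move=> hG; apply: lin_comp => //; apply: linDelta. Qed.
Lemma lin_S (X : lmodType k) (G : X -> H) : is_linear G -> is_linear (fun x => S (G x)).
Proof. by move=> hG; apply: lin_comp => //; apply: linS. Qed.
Lemma lin_mul1 (X : lmodType k) (G : X -> H) c : is_linear G -> is_linear (fun x => G x * c).
Proof. by move=> hG a x y; rewrite hG mulrDl scalerAl. Qed.
Lemma lin_mul2 (X : lmodType k) (G : X -> H) c : is_linear G -> is_linear (fun x => c * G x).
Proof. by move=> hG a x y; rewrite hG mulrDr scalerAr. Qed.
Lemma lin_eps (X W : lmodType k) (G : X -> H) (c : W) : is_linear G -> is_linear (fun x => eps (G x) *: c).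
Proof. by move=> hG a x y; rewrite hG epsL scalerDl scalerA. Qed.
Lemma lin_scale (X W : lmodType k) (G : X -> W) (c : k) : is_linear G -> is_linear (fun x => c *: G x).
Proof. by move=> hG a x y; rewrite hG scalerDr !scalerA mulrC. Qed.

Ltac lin_extra ::=
  match goal with
  | |- is_linear (fun x => Delta (@?G x)) => apply (lin_Delta (G:=G))
  | |- is_linear (fun x => S (@?G x)) => apply (lin_S (G:=G))
  | |- is_linear (fun x => (@?G x) * ?c) => apply (lin_mul1 (G:=G) c)
  | |- is_linear (fun x => ?c * (@?G x)) => apply (lin_mul2 (G:=G) c)
  | |- is_linear (fun x => eps (@?G x) *: ?c) => apply (lin_eps (G:=G) c)
  | |- is_linear (fun x => ?c *: (@?G x)) => apply (lin_scale (G:=G) c)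
  | |- is_linear (fun x => ?f (@?G x)) => apply (lin_comp (f:=f) (g:=G))
  end.

Local Notation D F x := (tlift HH F (Delta x)).

Lemma coassoc_gen (W : lmodType k) (F : H -> H -> H -> W) h :
  (forall b c, is_linear (fun a => F a b c)) ->
  (forall a c, is_linear (fun b => F a b c)) ->
  (forall a b, is_linear (fun c => F a b c)) ->
  D (fun a b => D (fun c d => F c d b) a) h = D (fun a b => D (fun c d => F a c d) b) h.
Proof.
move=> l1 l2 l3.
pose Psi := tlift HHH (fun p c => tlift HH (fun a b => F a b c) p).
have bPsi : is_bilinear (fun p c => tlift HH (fun a b => F a b c) p) by lin.
have := congr1 Psi (coass h); rewrite /Psi.
rewrite (tlift_nat (T:=HH)); [|by lin|by lin].
rewrite (tlift_nat (T:=HH)); [|by lin|by lin].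
move=> e; rewrite -[LHS]/(tlift HH _ _) -[RHS]/(tlift HH _ _).
transitivity (D (fun a b => tlift HHH (fun p c => tlift HH (fun a0 b0 => F a0 b0 c) p) (tens HHH (Delta a) b)) h).
  by apply: tlift_ext => a b; rewrite (tliftE HHH).
rewrite e; apply: tlift_ext => a b.
rewrite (tlift_nat (T:=HH)); [|by lin|by lin].
apply: tlift_ext => c d; rewrite (tliftE HHH) // (tliftE HH) //; lin.
Qed.


Lemma counit_genL (W : lmodType k) (phi : H -> W) h : is_linear phi ->
  D (fun a b => eps a *: phi b) h = phi h.
Proof.
move=> lp; rewrite -{2}(counitL h) (tlift_nat (T:=HH)) //; last by lin.
by apply: tlift_ext => a b; rewrite linZ.
Qed.

Lemma counit_genR (W : lmodType k) (phi : H -> W) h : is_linear phi ->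
  D (fun a b => eps b *: phi a) h = phi h.
Proof.
move=> lp; rewrite -{2}(counitR h) (tlift_nat (T:=HH)) //; last by lin.
by apply: tlift_ext => a b; rewrite linZ.
Qed.

Lemma anti_genL (W : lmodType k) (phi : H -> W) h : is_linear phi ->
  D (fun a b => phi (S a * b)) h = eps h *: phi 1.
Proof.
move=> lp; rewrite -linZ // -antiL (tlift_nat (T:=HH)) //; lin.
Qed.

Lemma anti_genR (W : lmodType k) (phi : H -> W) h : is_linear phi ->
  D (fun a b => phi (a * S b)) h = eps h *: phi 1.
Proof.
move=> lp; rewrite -linZ // -antiR (tlift_nat (T:=HH)) //; lin.
Qed.

Lemma mult_gen (W : lmodType k) (F : H -> H -> W) x y : is_bilinear F ->
  D F (x * y) = D (fun a b => D (fun c d => F (a * c) (b * d)) y) x.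
Proof.
move=> bF; rewrite DeltaM (tlift_nat (T:=HH)); [|by lin|by lin].
apply: tlift_ext => a b; rewrite (tlift_nat (T:=HH)); [|by lin|by lin].
by apply: tlift_ext => c d; rewrite (tliftE HH).
Qed.

Lemma unit_gen (W : lmodType k) (F : H -> H -> W) : is_bilinear F -> D F 1 = F 1 1.
Proof. by move=> bF; rewrite Delta1 (tliftE HH). Qed.

Lemma mid_gen (W : lmodType k) (K : H -> H -> H -> H -> W) g :
  (forall b c d, is_linear (fun a => K a b c d)) ->
  (forall a c d, is_linear (fun b => K a b c d)) ->
  (forall a b d, is_linear (fun c => K a b c d)) ->
  (forall a b c, is_linear (fun d => K a b c d)) ->
  D (fun a b => D (fun e f => D (fun c d => K e f c d) b) a) g =
  D (fun a b => D (fun c d => D (fun e f => K a e f d) c) b) g.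
Proof.
move=> l1 l2 l3 l4.
rewrite (coassoc_gen (F := fun e f b => D (fun c d => K e f c d) b)); try by lin.
apply: tlift_ext => a b.
by rewrite (coassoc_gen (F := fun x y z => K a x y z)); try by lin.
Qed.

Local Notation mulHH p q :=
  (tlift HH (fun a b => tlift HH (fun c d => tens HH (a * c) (b * d)) q) p).

Lemma mulHH_tens a b c d : mulHH (tens HH a b) (tens HH c d) = tens HH (a * c) (b * d).
Proof. rewrite (tliftE HH); last by lin. by rewrite (tliftE HH); last by lin. Qed.

Lemma mulHH_tensl a b q : mulHH (tens HH a b) q = tlift HH (fun c d => tens HH (a * c) (b * d)) q.
Proof. by rewrite (tliftE HH); last by lin. Qed.

Lemma mulHH_assoc p q r : mulHH (mulHH p q) r = mulHH p (mulHH q r).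
Proof.
move: p; apply: tens_ext; try by lin.
move=> a b /=; rewrite mulHH_tensl.
rewrite mulHH_tensl.
move: q; apply: tens_ext; try by lin.
move=> c d /=; rewrite mulHH_tensl !(tliftE HH); try by lin.
idtac.
move: r; apply: tens_ext; try by lin.
move=> e f /=; rewrite !(tliftE HH); try by lin.
by rewrite !mulrA.
Qed.

Lemma mulHH_1l q : mulHH (tens HH 1 1) q = q.
Proof.
rewrite mulHH_tensl; move: q; apply: tens_ext; try by lin.
by move=> c d /=; rewrite (tliftE HH) ?mul1r //; lin.
Qed.

Lemma mulHH_1r p : mulHH p (tens HH 1 1) = p.
Proof.
move: p; apply: tens_ext; try by lin.
by move=> c d /=; rewrite mulHH_tens !mulr1.
Qed.

Local Notation conv f g x := (D (fun a b => mulHH (f a) (g b)) x).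

Lemma conv_assoc (f g h : H -> tspace HH) x :
  is_linear f -> is_linear g -> is_linear h ->
  conv f (fun y => conv g h y) x = conv (fun y => conv f g y) h x.
Proof.
move=> lf lg lh.
transitivity (D (fun a b => D (fun c d => mulHH (f a) (mulHH (g c) (h d))) b) x).
  apply: tlift_ext => a b.
  rewrite (tlift_nat (T:=HH) (phi := fun q => mulHH (f a) q)); try by lin.
transitivity (D (fun a b => D (fun c d => mulHH (mulHH (f c) (g d)) (h b)) a) x).
  rewrite (coassoc_gen (F := fun c d b => mulHH (mulHH (f c) (g d)) (h b))); try by lin.
  by apply: tlift_ext => a b; apply: tlift_ext => c d; rewrite mulHH_assoc.
apply: tlift_ext => a b.
rewrite (tlift_nat (T:=HH) (phi := fun p => mulHH p (h b))); try by lin.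
Qed.

Lemma conv_unitR (f : H -> tspace HH) x : is_linear f ->
  conv f (fun b => eps b *: tens HH 1 1) x = f x.
Proof.
move=> lf; rewrite -(counit_genR x lf); apply: tlift_ext => a b.
by rewrite (linZ _ _ (f := fun q => mulHH (f a) q)) ?mulHH_1r //; lin.
Qed.

Lemma conv_unitL (f : H -> tspace HH) x : is_linear f ->
  conv (fun b => eps b *: tens HH 1 1) f x = f x.
Proof.
move=> lf; rewrite -(counit_genL x lf); apply: tlift_ext => a b.
by rewrite (linZ _ _ (f := fun p => mulHH p (f b))) ?mulHH_1l //; lin.
Qed.

Lemma conv_LD x : conv (fun a => Delta (S a)) Delta x = eps x *: tens HH 1 1.
Proof.
transitivity (D (fun a b => Delta (S a * b)) x).
  by apply: tlift_ext => a b; rewrite DeltaM.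
rewrite (anti_genL x (phi := Delta)) ?Delta1 //; exact: linDelta.
Qed.

Lemma conv_DR x : conv Delta (fun b => D (fun c d => tens HH (S d) (S c)) b) x = eps x *: tens HH 1 1.
Proof.
transitivity (D (fun a b => D (fun c d => D (fun e f => tens HH (c * S f) (d * S e)) b) a) x).
  apply: tlift_ext => a b.
  apply: tlift_ext => c d.
  rewrite (tlift_nat (T:=HH) (phi := fun q => tlift HH (fun c0 d0 => tens HH (c * c0) (d * d0)) q)); try by lin.
  by apply: tlift_ext => e f; rewrite (tliftE HH) //; lin.
rewrite (mid_gen (K := fun c d e f => tens HH (c * S f) (d * S e))); try by lin.
transitivity (D (fun a b => D (fun c d => eps c *: tens HH (a * S d) 1) b) x).
  apply: tlift_ext => a b; apply: tlift_ext => c d.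
  by rewrite (anti_genR c (phi := fun z => tens HH (a * S d) z)) //; lin.
transitivity (D (fun a b => tens HH (a * S b) 1) x).
  apply: tlift_ext => a b.
  by rewrite (counit_genL b (phi := fun z => tens HH (a * S z) 1)) //; lin.
rewrite -(tlift_nat (T:=HH) (phi := fun z => tens HH z 1)); try by lin.
rewrite antiR (linZ _ _ (f := fun z => tens HH z 1)) //; lin.
Qed.

Lemma DeltaS x : Delta (S x) = D (fun c d => tens HH (S d) (S c)) x.
Proof.
have lL : is_linear (fun a => Delta (S a)) by lin.
have lR : is_linear (fun b => D (fun c d => tens HH (S d) (S c)) b) by lin.
have lD : is_linear Delta by exact: linDelta.
transitivity (conv (fun a => Delta (S a)) (fun b => eps b *: tens HH 1 1) x).
  by rewrite (conv_unitR x lL).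
transitivity (conv (fun a => Delta (S a)) (fun y => conv Delta (fun b => D (fun c d => tens HH (S d) (S c)) b) y) x).
  by apply: tlift_ext => a b; rewrite conv_DR.
rewrite (conv_assoc x lL lD lR).
transitivity (conv (fun b => eps b *: tens HH 1 1) (fun b => D (fun c d => tens HH (S d) (S c)) b) x).
  by apply: tlift_ext => a b; rewrite conv_LD.
by rewrite (conv_unitL x lR).
Qed.

Lemma DS_gen (W : lmodType k) (F : H -> H -> W) x : is_bilinear F ->
  D F (S x) = D (fun a b => F (S b) (S a)) x.
Proof.
move=> bF; rewrite DeltaS (tlift_nat (T:=HH)); try by lin.
by apply: tlift_ext => a b; rewrite (tliftE HH).
Qed.

Section Main.
Variables (M N : lmodType k) (pi : H -> M -> M) (rho : H -> N -> N) (MN : tensor M N).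
Hypothesis pm : is_partial_module Delta S pi.
Hypothesis nm : is_module rho.

Lemma pi_bil : is_bilinear (fun h m => pi h m). Proof. by case: pm. Qed.
Lemma pi1 m : pi 1 m = m. Proof. by case: pm => _ [h _]; apply: h. Qed.
Lemma ax1 h g m : D (fun a b => pi h (pi a (pi (S b) m))) g = D (fun a b => pi (h * a) (pi (S b) m)) g.
Proof. by case: pm => _ [_ [h' _]]; apply: h'. Qed.
Lemma ax2 h g m : D (fun a b => pi a (pi (S b) (pi g m))) h = D (fun a b => pi a (pi (S b * g) m)) h.
Proof. by case: pm => _ [_ [_ [h' _]]]; apply: h'. Qed.
Lemma ax3 h g m : D (fun a b => pi h (pi (S a) (pi b m))) g = D (fun a b => pi (h * S a) (pi b m)) g.
Proof. by case: pm => _ [_ [_ [_ [h' _]]]]; apply: h'. Qed.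
Lemma ax4 h g m : D (fun a b => pi (S a) (pi b (pi g m))) h = D (fun a b => pi (S a) (pi (b * g) m)) h.
Proof. by case: pm => _ [_ [_ [_ [_ h']]]]; apply: h'. Qed.
Lemma rho_bil : is_bilinear (fun h n => rho h n). Proof. by case: nm. Qed.
Lemma rho1 n : rho 1 n = n. Proof. by case: nm. Qed.
Lemma rhoM x y n : rho (x * y) n = rho x (rho y n). Proof. by case: nm. Qed.

Lemma lin_pi1 (X : lmodType k) (G : X -> H) m : is_linear G -> is_linear (fun x => pi (G x) m).
Proof. move=> hG; apply: (lin_comp (f := fun h => pi h m)) => //; exact: (lin_bil1 m pi_bil). Qed.
Lemma lin_pi2 (X : lmodType k) (G : X -> M) h : is_linear G -> is_linear (fun x => pi h (G x)).
Proof. move=> hG; apply: (lin_comp (f := pi h)) => //; exact: (lin_bil2 h pi_bil). Qed.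
Lemma lin_rho1 (X : lmodType k) (G : X -> H) n : is_linear G -> is_linear (fun x => rho (G x) n).
Proof. move=> hG; apply: (lin_comp (f := fun h => rho h n)) => //; exact: (lin_bil1 n rho_bil). Qed.
Lemma lin_rho2 (X : lmodType k) (G : X -> N) h : is_linear G -> is_linear (fun x => rho h (G x)).
Proof. move=> hG; apply: (lin_comp (f := rho h)) => //; exact: (lin_bil2 h rho_bil). Qed.

Lemma lin_comp2 (X V Y W : lmodType k) (f : V -> Y -> W) (G : X -> V) c :
  (forall c, is_linear (fun v => f v c)) -> is_linear G -> is_linear (fun x => f (G x) c).
Proof. by move=> hf hG; apply: (lin_comp (f := fun v => f v c)). Qed.

Lemma lin_comp3 (X V Y Z W : lmodType k) (f : V -> Y -> Z -> W) (G : X -> V) c d :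
  (forall c d, is_linear (fun v => f v c d)) -> is_linear G -> is_linear (fun x => f (G x) c d).
Proof. by move=> hf hG; apply: (lin_comp (f := fun v => f v c d)). Qed.

Ltac lin_extra ::=
  match goal with
  | |- is_linear (fun x => Delta (@?G x)) => apply (lin_Delta (G:=G))
  | |- is_linear (fun x => S (@?G x)) => apply (lin_S (G:=G))
  | |- is_linear (fun x => pi (@?G x) ?m) => apply (lin_pi1 (G:=G) m)
  | |- is_linear (fun x => pi ?h (@?G x)) => apply (lin_pi2 (G:=G) h)
  | |- is_linear (fun x => rho (@?G x) ?m) => apply (lin_rho1 (G:=G) m)
  | |- is_linear (fun x => rho ?h (@?G x)) => apply (lin_rho2 (G:=G) h)
  | |- is_linear (fun x => (@?G x) * ?c) => apply (lin_mul1 (G:=G) c)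
  | |- is_linear (fun x => ?c * (@?G x)) => apply (lin_mul2 (G:=G) c)
  | |- is_linear (fun x => eps (@?G x) *: ?c) => apply (lin_eps (G:=G) c)
  | |- is_linear (fun x => ?c *: (@?G x)) => apply (lin_scale (G:=G) c)
  | |- is_linear (fun x => ?f (@?G x)) => apply (lin_comp (f:=f) (g:=G))
  | |- is_linear (fun x => ?f (@?G x) ?c) => apply (lin_comp2 (f:=f) (G:=G) c)
  | |- is_linear (fun x => ?f (@?G x) ?c ?d) => apply (lin_comp3 (f:=f) (G:=G) c d)
  end.

Local Notation piMN h x := (tlift MN (fun m n => D (fun a b => tens MN (pi a m) (rho b n)) h) x).
Local Notation Tm A n x y z := (D (fun z1 z2 => D (fun y1 y2 => D (fun x1 x2 =>
   tens MN (A x1 y1 z1) (rho (x2 * (y2 * z2)) n)) x) y) z).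

Lemma piMN_tens h m n : piMN h (tens MN m n) = D (fun a b => tens MN (pi a m) (rho b n)) h.
Proof. by rewrite (tliftE MN); lin. Qed.

Lemma three x y z m n : piMN x (piMN y (piMN z (tens MN m n))) =
  Tm (fun a b c => pi a (pi b (pi c m))) n x y z.
Proof.
rewrite piMN_tens (tlift_nat (T:=HH) (phi := fun t => piMN y t)); try by lin.
rewrite (tlift_nat (T:=HH) (phi := fun t => piMN x t)); try by lin.
apply: tlift_ext => c d; rewrite piMN_tens.
rewrite (tlift_nat (T:=HH) (phi := fun t => piMN x t)); try by lin.
apply: tlift_ext => a b; rewrite piMN_tens.
by apply: tlift_ext => e f; rewrite !rhoM.
Qed.

Lemma two_l x y z m n : piMN (x * y) (piMN z (tens MN m n)) =
  Tm (fun a b c => pi (a * b) (pi c m)) n x y z.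
Proof.
rewrite piMN_tens (tlift_nat (T:=HH) (phi := fun t => piMN (x * y) t)); try by lin.
apply: tlift_ext => c d; rewrite piMN_tens mult_gen; last by lin.
rewrite (fubini (T1 := HH) (T2 := HH)); try by lin.
apply: tlift_ext => a b; apply: tlift_ext => e f.
by rewrite !rhoM.
Qed.

Lemma two_r x y z m n : piMN x (piMN (y * z) (tens MN m n)) =
  Tm (fun a b c => pi a (pi (b * c) m)) n x y z.
Proof.
rewrite piMN_tens mult_gen; last by lin.
rewrite (tlift_nat (T:=HH) (phi := fun t => piMN x t)); try by lin.
transitivity (D (fun a b => D (fun c d => piMN x (tens MN (pi (a * c) m) (rho (b * d) n))) z) y).
  apply: tlift_ext => a b; rewrite (tlift_nat (T:=HH) (phi := fun t => piMN x t)) //; lin.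
rewrite (fubini (T1 := HH) (T2 := HH)); try by lin.
apply: tlift_ext => c d; apply: tlift_ext => a b; rewrite piMN_tens.
by apply: tlift_ext => e f; rewrite !rhoM.
Qed.


Section NF.
Variables (A : H -> H -> H -> M) (n : N).
Hypothesis lA1 : forall b c, is_linear (fun a => A a b c).
Hypothesis lA2 : forall a c, is_linear (fun b => A a b c).
Hypothesis lA3 : forall a b, is_linear (fun c => A a b c).

Lemma NF1 h g : D (fun a b => Tm A n h a (S b)) g =
  D (fun x1 x2 => tens MN (D (fun a b => A x1 a (S b)) g) (rho (x2 * 1) n)) h.
Proof.
transitivity (D (fun a b => D (fun c d => D (fun e f =>
   D (fun x1 x2 => tens MN (A x1 e (S d)) (rho (x2 * (f * S c)) n)) h) a) b) g).
  by apply: tlift_ext => a b; rewrite DS_gen //; lin.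
transitivity (D (fun a b => D (fun e f => D (fun c d =>
   D (fun x1 x2 => tens MN (A x1 e (S d)) (rho (x2 * (f * S c)) n)) h) b) a) g).
  by apply: tlift_ext => a b; rewrite (fubini (T1 := HH) (T2 := HH)); try by lin.
rewrite (mid_gen (K := fun e f c d => D (fun x1 x2 => tens MN (A x1 e (S d)) (rho (x2 * (f * S c)) n)) h)); try by lin.
transitivity (D (fun a b => D (fun x1 x2 => tens MN (A x1 a (S b)) (rho (x2 * 1) n)) h) g).
  apply: tlift_ext => a b.
  transitivity (D (fun c d => eps c *: D (fun x1 x2 => tens MN (A x1 a (S d)) (rho (x2 * 1) n)) h) b).
    apply: tlift_ext => c d.
    by rewrite (anti_genR c (phi := fun z => D (fun x1 x2 => tens MN (A x1 a (S d)) (rho (x2 * z) n)) h)); lin.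
  by rewrite (counit_genL b (phi := fun z => D (fun x1 x2 => tens MN (A x1 a (S z)) (rho (x2 * 1) n)) h)); lin.
rewrite (fubini (T1 := HH) (T2 := HH)); try by lin.
apply: tlift_ext => x1 x2.
by rewrite (tlift_nat (T:=HH) (phi := fun z => tens MN z (rho (x2 * 1) n))); lin.
Qed.


Lemma NF2 h g : D (fun a b => Tm A n a (S b) g) h =
  D (fun z1 z2 => tens MN (D (fun a b => A a (S b) z1) h) (rho (1 * z2) n)) g.
Proof.
transitivity (D (fun a b => D (fun z1 z2 => D (fun c d => D (fun e f =>
   tens MN (A e (S d) z1) (rho (f * (S c * z2)) n)) a) b) g) h).
  by apply: tlift_ext => a b; apply: tlift_ext => z1 z2; rewrite DS_gen //; lin.
rewrite (fubini (T1 := HH) (T2 := HH)); try by lin.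
apply: tlift_ext => z1 z2.
transitivity (D (fun a b => D (fun e f => D (fun c d =>
   tens MN (A e (S d) z1) (rho (f * S c * z2) n)) b) a) h).
  apply: tlift_ext => a b; rewrite (fubini (T1 := HH) (T2 := HH)); try by lin.
  by apply: tlift_ext => e f; apply: tlift_ext => c d; rewrite mulrA.
transitivity (D (fun a b => D (fun c d => D (fun e f => tens MN (A a (S d) z1) (rho (e * S f * z2) n)) c) b) h).
  by apply: (mid_gen (K := fun e f c d => tens MN (A e (S d) z1) (rho (f * S c * z2) n))); lin.
rewrite (tlift_nat (T:=HH) (phi := fun z => tens MN z (rho (1 * z2) n))); try by lin.
apply: tlift_ext => a b.
transitivity (D (fun c d => eps c *: tens MN (A a (S d) z1) (rho (1 * z2) n)) b).
  apply: tlift_ext => c d.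
  by rewrite (anti_genR c (phi := fun z => tens MN (A a (S d) z1) (rho (z * z2) n))); lin.
by rewrite (counit_genL b (phi := fun z => tens MN (A a (S z) z1) (rho (1 * z2) n))); lin.
Qed.

Lemma NF3 h g : D (fun a b => Tm A n h (S a) b) g =
  D (fun a b => D (fun c d => D (fun x1 x2 =>
     tens MN (D (fun e f => A x1 (S e) f) c) (rho (x2 * (S a * d)) n)) h) b) g.
Proof.
transitivity (D (fun a b => D (fun c d => D (fun e f =>
   D (fun x1 x2 => tens MN (A x1 (S f) c) (rho (x2 * (S e * d)) n)) h) a) b) g).
  by apply: tlift_ext => a b; apply: tlift_ext => z1 z2; rewrite DS_gen //; lin.
transitivity (D (fun a b => D (fun e f => D (fun c d =>
   D (fun x1 x2 => tens MN (A x1 (S f) c) (rho (x2 * (S e * d)) n)) h) b) a) g).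
  by apply: tlift_ext => a b; rewrite (fubini (T1 := HH) (T2 := HH)); try by lin.
transitivity (D (fun a b => D (fun c d => D (fun e f =>
   D (fun x1 x2 => tens MN (A x1 (S e) f) (rho (x2 * (S a * d)) n)) h) c) b) g).
  by apply: (mid_gen (K := fun e f c d => D (fun x1 x2 => tens MN (A x1 (S f) c) (rho (x2 * (S e * d)) n)) h)); lin.
apply: tlift_ext => a b; apply: tlift_ext => c d.
rewrite (fubini (T1 := HH) (T2 := HH)); try by lin.
apply: tlift_ext => x1 x2.
by rewrite (tlift_nat (T:=HH) (phi := fun z => tens MN z (rho (x2 * (S a * d)) n))); lin.
Qed.

Lemma NF4 h g : D (fun a b => Tm A n (S a) b g) h =
  D (fun z1 z2 => D (fun a b => D (fun c d =>
     tens MN (D (fun e f => A (S e) f z1) c) (rho (S a * (d * z2)) n)) b) h) g.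
Proof.
transitivity (D (fun a b => D (fun z1 z2 => D (fun c d => D (fun e f =>
   tens MN (A (S f) c z1) (rho (S e * (d * z2)) n)) a) b) g) h).
  by apply: tlift_ext => a b; apply: tlift_ext => z1 z2; apply: tlift_ext => y1 y2; rewrite DS_gen //; lin.
rewrite (fubini (T1 := HH) (T2 := HH)); try by lin.
apply: tlift_ext => z1 z2.
transitivity (D (fun a b => D (fun e f => D (fun c d =>
   tens MN (A (S f) c z1) (rho (S e * (d * z2)) n)) b) a) h).
  by apply: tlift_ext => a b; rewrite (fubini (T1 := HH) (T2 := HH)); try by lin.
transitivity (D (fun a b => D (fun c d => D (fun e f =>
   tens MN (A (S e) f z1) (rho (S a * (d * z2)) n)) c) b) h).
  by apply: (mid_gen (K := fun e f c d => tens MN (A (S f) c z1) (rho (S e * (d * z2)) n))); lin.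
apply: tlift_ext => a b; apply: tlift_ext => c d.
by rewrite (tlift_nat (T:=HH) (phi := fun z => tens MN z (rho (S a * (d * z2)) n))); lin.
Qed.
End NF.

Lemma MN_ax1 h g x :
  D (fun a b => piMN h (piMN a (piMN (S b) x))) g = D (fun a b => piMN (h * a) (piMN (S b) x)) g.
Proof.
move: x; apply: tens_ext; try by lin.
move=> m n /=.
transitivity (D (fun a b => Tm (fun x y z => pi x (pi y (pi z m))) n h a (S b)) g).
  by apply: tlift_ext => a b; rewrite three.
transitivity (D (fun a b => Tm (fun x y z => pi (x * y) (pi z m)) n h a (S b)) g); last first.
  by apply: tlift_ext => a b; rewrite two_l.
rewrite NF1; try by lin.
rewrite NF1; try by lin.
by apply: tlift_ext => x1 x2; rewrite ax1.
Qed.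

Lemma MN_ax2 h g x :
  D (fun a b => piMN a (piMN (S b) (piMN g x))) h = D (fun a b => piMN a (piMN (S b * g) x)) h.
Proof.
move: x; apply: tens_ext; try by lin.
move=> m n /=.
transitivity (D (fun a b => Tm (fun x y z => pi x (pi y (pi z m))) n a (S b) g) h).
  by apply: tlift_ext => a b; rewrite three.
transitivity (D (fun a b => Tm (fun x y z => pi x (pi (y * z) m)) n a (S b) g) h); last first.
  by apply: tlift_ext => a b; rewrite two_r.
rewrite NF2; try by lin.
rewrite NF2; try by lin.
by apply: tlift_ext => x1 x2; rewrite ax2.
Qed.

Lemma MN_ax3 h g x :
  D (fun a b => piMN h (piMN (S a) (piMN b x))) g = D (fun a b => piMN (h * S a) (piMN b x)) g.
Proof.
move: x; apply: tens_ext; try by lin.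
move=> m n /=.
transitivity (D (fun a b => Tm (fun x y z => pi x (pi y (pi z m))) n h (S a) b) g).
  by apply: tlift_ext => a b; rewrite three.
transitivity (D (fun a b => Tm (fun x y z => pi (x * y) (pi z m)) n h (S a) b) g); last first.
  by apply: tlift_ext => a b; rewrite two_l.
rewrite NF3; try by lin.
rewrite NF3; try by lin.
apply: tlift_ext => a b; apply: tlift_ext => c d; apply: tlift_ext => x1 x2.
by rewrite ax3.
Qed.

Lemma MN_ax4 h g x :
  D (fun a b => piMN (S a) (piMN b (piMN g x))) h = D (fun a b => piMN (S a) (piMN (b * g) x)) h.
Proof.
move: x; apply: tens_ext; try by lin.
move=> m n /=.
transitivity (D (fun a b => Tm (fun x y z => pi x (pi y (pi z m))) n (S a) b g) h).
  by apply: tlift_ext => a b; rewrite three.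
transitivity (D (fun a b => Tm (fun x y z => pi x (pi (y * z) m)) n (S a) b g) h); last first.
  by apply: tlift_ext => a b; rewrite two_r.
rewrite NF4; try by lin.
rewrite NF4; try by lin.
apply: tlift_ext => z1 z2; apply: tlift_ext => a b; apply: tlift_ext => c d.
by rewrite ax4.
Qed.

Lemma MN_partial : is_partial_module Delta S (fun h x => piMN h x).
Proof.
split; first by lin.
split.
  move=> x /=; move: x; apply: tens_ext; try by lin.
  by move=> m n /=; rewrite piMN_tens unit_gen ?pi1 ?rho1 //; lin.
split; first by move=> h g x; exact: MN_ax1.
split; first by move=> h g x; exact: MN_ax2.
split; first by move=> h g x; exact: MN_ax3.
by move=> h g x; exact: MN_ax4.
Qed.
End Main.
End Hopf.

Unset Implicit Arguments.
Theorem mainTheorem16 (k : fieldType) (H : algType k) (HH : tensor H H)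
  (HHH : tensor (tspace HH) H) (Delta : H -> tspace HH) (eps : H -> k)
  (S : H -> H) (M N : lmodType k) (pi : H -> M -> M) (rho : H -> N -> N)
  (MN : tensor M N) :
  is_hopf HHH Delta eps S ->
  is_partial_module Delta S pi ->
  is_module rho ->
  exists piMN : H -> tspace MN -> tspace MN,
    is_partial_module Delta S piMN /\
    (forall (h : H) (m : M) (n : N),
       piMN h (tens MN m n) =
       tlift HH (fun a b => tens MN (pi a m) (rho b n)) (Delta h)).
Proof.
move=> hopf pm nm.
exists (fun h x => tlift MN (fun m n => tlift HH (fun a b => tens MN (pi a m) (rho b n)) (Delta h)) x).
split; first exact: (MN_partial hopf MN pm nm).
move=> h m n; exact: (piMN_tens MN pm nm).
Qed.
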